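(* For the complete graph $K_n$ with $n\ge 3$ vertices, $b_{OCD}(K_n)=1$ if $n=3$ and $b_{OCD}(K_n)=\lceil n/2\rceil$ if $n\ge 4$.
   Context: A set $S\subseteq V$ is a dominating set of a graph $G=(V,E)$ if every vertex not in $S$ is adjacent to a vertex of $S$. A set $\tilde D\subseteq V$ is an outer-connected dominating set of $G$ if $\tilde D$ is dominating and the induced subgraph $G[V\setminus\tilde D]$ is connected (the empty graph counts as connected). $\tilde\gamma_c(G)$ is the minimum size of an outer-connected dominating set. For a graph $G$ without isolated vertices, the outer-connected bondage number $b_{OCD}(G)$ is the minimum number of edges whose removal from $G$ yields a graph $G'$ with $\tilde\gamma_c(G')>\tilde\gamma_c(G)$. *)

(* Defs.v *)
(* Simple graphs on a finType T given by a symmetric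
   irreflexive boolean relation e. *)
From mathcomp Require Import all_boot.
Set Implicit Arguments. Unset Strict Implicit. Unset Printing Implicit Defensive.

Section Graphs.
Variable T : finType.

Definition dominating (e : rel T) (S : {set T}) : bool :=
  [forall x, (x \notin S) ==> [exists y, (y \in S) && e x y]].

Definition outer_rel (e : rel T) (S : {set T}) : rel T :=
  [rel x y | [&& e x y, x \notin S & y \notin S]].

(* G[V \ S] is connected (vacuously when V \ S is empty). *)
Definition outer_connected (e : rel T) (S : {set T}) : bool :=
  [forall x, forall y, ((x \notin S) && (y \notin S)) ==> connect (outer_rel e S) x y].

Definition ocd (e : rel T) (S : {set T}) : bool :=
  dominating e S && outer_connected e S.

(* outer-connected domination number; setT is always an OCD set,
   so this is the true minimum. *)
Definition ocd_number (e : rel T) : nat :=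
  \big[minn/#|T|]_(S : {set T} | ocd e S) #|S|.

Definition edges (e : rel T) : {set {set T}} :=
  [set [set x; y] | x in T, y in T & e x y].

Definition remove_edges (e : rel T) (F : {set {set T}}) : rel T :=
  [rel x y | e x y && ([set x; y] \notin F)].

Definition ocd_bondage_witness (e : rel T) (F : {set {set T}}) : bool :=
  (F \subset edges e) && (ocd_number e < ocd_number (remove_edges e F)).

(* outer-connected bondage number: minimum number of edges whose removal
   increases ocd_number.  Default (#|edges e|.+1) only if no such set exists. *)
Definition ocd_bondage (e : rel T) : nat :=
  \big[minn/#|edges e|.+1]_(F : {set {set T}} | ocd_bondage_witness e F) #|F|.
End Graphs.

Definition complete_graph (n : nat) : rel 'I_n := [rel x y | x != y].
Arguments complete_graph n : clear implicits.

(* Main.v *)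
Require Import Defs.
From mathcomp Require Import all_boot zify.
Set Implicit Arguments. Unset Strict Implicit.
Lemma bigmin_le (I : finType) (P : pred I) (F : I -> nat) d i : P i -> \big[minn/d]_(j | P j) F j <= F i.
Proof. move=> Pi. rewrite -big_filter.
have : i \in [seq j <- index_enum I | P j] by rewrite mem_filter Pi mem_index_enum.
elim: [seq _ <- _ | _] => // a s IH. rewrite big_cons inE => /orP[/eqP<-|/IH h].
exact: geq_minl. by rewrite geq_min h orbT. Qed.
Lemma bigmin_ge (I : finType) (P : pred I) (F : I -> nat) d m : m <= d -> (forall i, P i -> m <= F i) -> m <= \big[minn/d]_(j | P j) F j.
Proof. move=> hd hF. elim/big_ind: _ => // x y hx hy. by rewrite leq_min hx hy. Qed.
Lemma in_edges (T : finType) (e : rel T) x y : e x y -> [set x; y] \in edges e.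
Proof. move=> h. apply/imset2P. by exists x y; rewrite ?inE. Qed.

Section K.
Variable n : nat.
Hypothesis hn : 3 <= n.
Let e := complete_graph n.
Let x0 : 'I_n := Ordinal (leq_trans (isT : 0 < 3) hn).

Lemma ocd_K_ge1 (f : rel 'I_n) : 1 <= ocd_number f.
Proof.
apply: bigmin_ge; first by rewrite card_ord; lia.
move=> S /andP[/forallP /(_ x0) hd _]. rewrite card_gt0; apply/set0Pn.
case: (boolP (x0 \in S)) => [h|h]; first by exists x0.
by move: hd; rewrite h => /existsP[y /andP[hy _]]; exists y.
Qed.

Lemma ocd_single (f : rel 'I_n) v : ocd f [set v] -> ocd_number f <= 1.
Proof. move=> h. by rewrite -(cards1 v); apply: bigmin_le. Qed.

Lemma ocd_K_le1 : ocd_number e <= 1.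
Proof.
apply: (@ocd_single _ x0). apply/andP; split.
  apply/forallP=> x; apply/implyP; rewrite inE => hx.
  by apply/existsP; exists x0; rewrite inE eqxx /= /e /=.
apply/forallP=> x; apply/forallP=> y; apply/implyP => /andP[hx hy].
case: (eqVneq x y) => [->|hxy]; first exact: connect0.
by apply: connect1; rewrite /outer_rel /e /complete_graph /= hxy hx hy.
Qed.

Lemma cover_small (F : {set {set 'I_n}}) : F \subset edges e -> 2 * #|F| < n ->
  exists v, forall x, [set v; x] \notin F.
Proof.
move=> hF hc.
have : #|cover F| < #|'I_n|.
  rewrite card_ord; apply: leq_ltn_trans hc.
  apply: leq_trans (leq_card_cover F) _.
  rewrite mulnC -sum_nat_const; apply: leq_sum => E /(subsetP hF) /imset2P[x y _ _ ->].
  by rewrite cards2; case: (_ != _).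
rewrite -(cardsC (cover F)) -{1}[#|cover F|]addn0 ltn_add2l => hlt.
move: hlt.
rewrite card_gt0 => /set0Pn[v]; rewrite inE => hv.
exists v => x; apply: contra hv => hE.
by apply/bigcupP; exists [set v; x]; rewrite // !inE eqxx.
Qed.
Lemma lower (F : {set {set 'I_n}}) : F \subset edges e -> 2 * #|F| < n -> #|F| + 3 <= n ->
  ocd_number (remove_edges e F) <= 1.
Proof.
move=> hF hc h3. have [v hv] := cover_small hF hc.
have hv' x : [set x; v] \notin F by rewrite setUC hv.
apply: (@ocd_single _ v). apply/andP; split.
  apply/forallP=> x; apply/implyP; rewrite inE => hx.
  by apply/existsP; exists v; rewrite !inE eqxx /=; apply/andP; split; [exact: hx | exact: hv'].
apply/forallP=> x; apply/forallP=> y; apply/implyP => /andP[hx hy].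
case: (eqVneq x y) => [->|hxy]; first exact: connect0.
have Hr a b : a != b -> a \notin [set v] -> b \notin [set v] -> [set a; b] \notin F ->
   outer_rel (remove_edges e F) [set v] a b.
  by move=> ab ha hb hab; apply/and3P; split => //; apply/andP; split.
case: (boolP ([set x; y] \in F)) => hxyF; last by apply: connect1; apply: Hr.
have [z hz] : exists z, [&& z \notin [set v; x; y], [set x; z] \notin F & [set z; y] \notin F].
  apply/existsP; apply: contraT; rewrite negb_exists => /forallP hall.
  pose phi z := if [set x; z] \in F then [set x; z] else [set z; y].
  pose B := ~: [set v; x; y].
  have hinj : {in B &, injective phi}.
    move=> z1 z2; rewrite !inE !negb_or => /andP[/andP[_ hz1x] hz1y] /andP[/andP[_ hz2x] hz2y].
    rewrite /phi; case: ifP => _; case: ifP => _ /setP.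
    - move/(_ z1); rewrite !inE eqxx orbT (negbTE hz1x) /= => /esym /eqP //.
    - move/(_ x); rewrite !inE eqxx /= eq_sym (negbTE hz2x) (negbTE hxy) //.
    - move/(_ x); rewrite !inE eqxx /= eq_sym (negbTE hz1x) (negbTE hxy) //.
    - move/(_ z1); rewrite !inE eqxx /= (negbTE hz1y) orbF => /esym /eqP //.
  have hsub : phi @: B \subset F :\ [set x; y].
    apply/subsetP => E /imsetP[z]; rewrite !inE !negb_or => /andP[/andP[hzv hzx] hzy] ->.
    have := hall z; rewrite !negb_and !negbK !inE (negbTE hzv) (negbTE hzx) (negbTE hzy) /=.
    rewrite /phi; case: ifP => hxz /= h; rewrite ?h ?hxz andbT;
      apply/eqP => /setP/(_ z); rewrite !inE eqxx ?orbT (negbTE hzx) (negbTE hzy) //.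
  have := subset_leq_card hsub; rewrite card_in_imset // => hle.
  have := cardsD1 [set x; y] F; rewrite hxyF /= => hD.
  have h3' : #|[set v; x; y]| <= 3.
    apply: leq_trans (leq_card_setU _ _) _; rewrite cards1 cards2; by case: (_ != _).
  move: (cardsC [set v; x; y]) hle; rewrite card_ord -/B. simpl in hD. move=> E1 E2.
  have : n <= 3 + #|F :\ [set x; y]| 
    by apply: (@leq_trans (#|[set v; x; y]| + #|B|)); [rewrite E1 | exact: leq_add].
  move=> hh; move: hD h3 hh. move: #|F :\ [set x; y]| #|F| => a b. lia.
case/and3P: hz; rewrite !inE !negb_or => /andP[/andP[hzv hzx] hzy] h1 h2.
apply: (connect_trans (y:=z)); apply: connect1; apply: Hr; rewrite ?inE //.
all: try by rewrite eq_sym.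
all: by [move: hx; rewrite inE | move: hy; rewrite inE].
Qed.
Lemma upper_gen (f : rel 'I_n) : (forall v, ~~ ocd f [set v]) -> 1 < ocd_number f.
Proof.
move=> hv; apply: bigmin_ge; first by rewrite card_ord; lia.
move=> S hS; rewrite ltnNge; apply/negP => hle.
have : #|S| = 0 \/ #|S| = 1 by lia.
case=> [/eqP|/eqP/cards1P[v hSv]].
  rewrite cards_eq0 => /eqP hS0; move: hS; rewrite hS0 => /andP[/forallP/(_ x0)].
  by rewrite inE /= => /existsP[y]; rewrite inE.
by move: (hv v); rewrite -hSv hS.
Qed.

Lemma nonadj_not_ocd (F : {set {set 'I_n}}) v u : u != v -> [set v; u] \in F ->
  ~~ ocd (remove_edges e F) [set v].
Proof.
move=> huv hF; apply/negP => /andP[/forallP/(_ u)]; rewrite inE huv /=.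
move=> /existsP[y]; rewrite inE => /andP[/eqP -> /andP[_]].
by rewrite setUC hF.
Qed.
Let h (k : nat) : 'I_n := insubd x0 k.
Lemma val_h k : val (h k) = if k < n then k else 0.
Proof. by rewrite /h val_insubd. Qed.

Let Fw := [set [set h (2 * i); h (2 * i).+1] | i : 'I_((n + 1) %/ 2)].

Lemma Fw_sub : Fw \subset edges e.
Proof.
apply/subsetP => E /imsetP[i _ ->]; apply: in_edges.
rewrite /e /complete_graph /=; apply/eqP => /(congr1 val); rewrite !val_h.
have := ltn_ord i; case: ifP; case: ifP; lia.
Qed.

Lemma Fw_card : #|Fw| <= (n + 1) %/ 2.
Proof. by apply: leq_trans (leq_imset_card _ _) _; rewrite card_ord. Qed.

Lemma Fw_cover v : exists u, u != v /\ [set v; u] \in Fw.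
Proof.
have hi : v %/ 2 < (n + 1) %/ 2 by have := ltn_ord v; lia.
pose i := Ordinal hi.
have hv := ltn_ord v.
case: (boolP (v %% 2 == 0)) => hodd.
  have e1 : h (2 * i) = v by apply: val_inj; rewrite val_h /=; case: ifP; lia.
  exists (h (2 * i).+1); split.
    rewrite -e1; apply/eqP => /(congr1 val); rewrite !val_h /=; case: ifP; case: ifP; lia.
  by apply/imsetP; exists i => //; rewrite e1.
have e1 : h (2 * i).+1 = v by apply: val_inj; rewrite val_h /=; case: ifP; lia.
exists (h (2 * i)); split.
  rewrite -e1; apply/eqP => /(congr1 val); rewrite !val_h /=; case: ifP; case: ifP; lia.
by apply/imsetP; exists i => //; rewrite e1 setUC.
Qed.
Let F3 := [set [set x0; h 1]].

Lemma F3_sub : F3 \subset edges e.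
Proof.
apply/subsetP => E; rewrite inE => /eqP ->; apply: in_edges.
rewrite /e /complete_graph /=; apply/eqP => /(congr1 val); rewrite !val_h /=; case: ifP; lia.
Qed.

Lemma F3_not (h3 : n = 3) v : ~~ ocd (remove_edges e F3) [set v].
Proof.
have hF3 : [set x0; h 1] \in F3 by rewrite inE.
have v1 : val (h 1) = 1 by rewrite val_h; case: ifP; lia.
have n01 : h 1 != x0 by apply/eqP => /(congr1 val); rewrite v1.
case: (eqVneq v x0) => [->|hv0]; first exact: (nonadj_not_ocd n01).
case: (eqVneq v (h 1)) => [->|hv1].
  by apply: (nonadj_not_ocd (u := x0)); rewrite 1?eq_sym // setUC.
apply/negP => /andP[_ /forallP/(_ x0)/forallP/(_ (h 1))].
rewrite !inE eq_sym hv0 eq_sym hv1 /= => /connectP[[|y p] /=].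
  by move=> _ h10; move: n01; rewrite h10 eqxx.
case/andP => /and3P[/andP[hy0 hyF] hx0v hyv] _ _.
have hy1 : y != h 1 by apply: contra hyF => /eqP ->; rewrite hF3.
rewrite inE in hyv.
have : val y = val v.
  have hy0' : y != x0 by rewrite eq_sym.
  move: hy0' hy1 hv0 hv1 (ltn_ord y) (ltn_ord v).
  rewrite -!(inj_eq val_inj) v1 /=; lia.
by move/val_inj/eqP; rewrite (negbTE hyv).
Qed.
Let b := if n == 3 then 1 else (n + 1) %/ 2.

Lemma lowerb (F : {set {set 'I_n}}) : ocd_bondage_witness e F -> b <= #|F|.
Proof.
case/andP => hsub hlt; rewrite leqNgt; apply/negP => hF.
have hc : 2 * #|F| < n /\ #|F| + 3 <= n.
  move: hF; rewrite /b; case: eqP => hn3; move: (#|F|) => k; lia.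
have := lower hsub (proj1 hc) (proj2 hc).
have := ocd_K_ge1 e. lia.
Qed.

Lemma main_sec : ocd_bondage e = b.
Proof.
have [F0 [hw hc]] : exists F0, ocd_bondage_witness e F0 /\ #|F0| <= b.
  rewrite /b; case: eqP => hn3.
    exists F3; split; last by rewrite cards1.
    rewrite /ocd_bondage_witness F3_sub /=.
    apply: leq_ltn_trans ocd_K_le1 _; apply: upper_gen => v; exact: F3_not.
  exists Fw; split; last exact: Fw_card.
  rewrite /ocd_bondage_witness Fw_sub /=.
  apply: leq_ltn_trans ocd_K_le1 _; apply: upper_gen => v.
  have [u [huv hu]] := Fw_cover v; exact: nonadj_not_ocd huv hu.
apply/eqP; rewrite eqn_leq; apply/andP; split.
  exact: leq_trans (bigmin_le _ _ hw) hc.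
apply: bigmin_ge; last exact: lowerb.
apply: ltnW; apply: leq_ltn_trans (lowerb hw) _.
by rewrite ltnS; apply: subset_leq_card; case/andP: hw.
Qed.
End K.

Theorem mainTheorem8 (n : nat) (hn : 3 <= n) :
  ocd_bondage (complete_graph n) = (if n == 3 then 1 else (n + 1) %/ 2).
Proof. exact: main_sec. Qed.
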